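(* Let $K\subseteq\mathbb{R}^n$ be non-empty and closed. If $s=(s_\alpha)_{\alpha\in\mathbb{N}_0^n}$ is a $K^\sharp$-moment sequence, then $D(s)$ is a $K$-positivity preserver.
   Context: $D(s):=\sum_\alpha\frac{s_\alpha}{\alpha!}\partial^\alpha$ on $\mathbb{R}[x_1,\dots,x_n]$. $T$ is a $K$-positivity preserver if it maps polynomials non-negative on $K$ to polynomials non-negative on $K$. $K^\sharp:=\{x\in\mathbb{R}^n: x+K\subseteq K\}$. For closed $L$, $s$ is an $L$-moment sequence if $s_\alpha=\int x^\alpha\,\mathrm{d}\mu$ for all $\alpha$ for some measure $\mu$ with $\mathrm{supp}\,\mu\subseteq L$. *)

(* Defs.v *)
From HB Require Import structures.
From mathcomp Require Import all_boot all_order all_algebra.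
From mathcomp Require Import all_classical all_reals all_analysis.
From mathcomp Require mpoly.
(* activate mpoly's canonical instances (they are export-local and we cannot
   Import mpoly next to mathcomp-analysis because of notation clashes) *)
Canonical mpoly.mpoly_MPoly__canonical__Algebra_Additive.
Canonical mpoly.mpoly_MPoly__canonical__GRing_Linear.
Canonical mpoly.mpoly_bmultinom__canonical__choice_Choice.
Canonical mpoly.mpoly_bmultinom__canonical__choice_Countable.
Canonical mpoly.mpoly_bmultinom__canonical__choice_SubChoice.
Canonical mpoly.mpoly_bmultinom__canonical__choice_SubCountable.
Canonical mpoly.mpoly_bmultinom__canonical__eqtype_Equality.
Canonical mpoly.mpoly_bmultinom__canonical__eqtype_SubEquality.
Canonical mpoly.mpoly_bmultinom__canonical__eqtype_SubType.
Canonical mpoly.mpoly_bmultinom__canonical__fintype_Finite.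
Canonical mpoly.mpoly_bmultinom__canonical__fintype_SubFinite.
Canonical mpoly.mpoly_comp_mpoly__canonical__Algebra_Additive.
Canonical mpoly.mpoly_comp_mpoly__canonical__GRing_LRMorphism.
Canonical mpoly.mpoly_comp_mpoly__canonical__GRing_Linear.
Canonical mpoly.mpoly_comp_mpoly__canonical__GRing_RMorphism.
Canonical mpoly.mpoly_dhomog__canonical__Algebra_AddMagma.
Canonical mpoly.mpoly_dhomog__canonical__Algebra_AddSemigroup.
Canonical mpoly.mpoly_dhomog__canonical__Algebra_AddUMagma.
Canonical mpoly.mpoly_dhomog__canonical__Algebra_BaseAddMagma.
Canonical mpoly.mpoly_dhomog__canonical__Algebra_BaseAddUMagma.
Canonical mpoly.mpoly_dhomog__canonical__Algebra_BaseZmodule.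
Canonical mpoly.mpoly_dhomog__canonical__Algebra_ChoiceBaseAddMagma.
Canonical mpoly.mpoly_dhomog__canonical__Algebra_ChoiceBaseAddUMagma.
Canonical mpoly.mpoly_dhomog__canonical__Algebra_Nmodule.
Canonical mpoly.mpoly_dhomog__canonical__Algebra_SubAddUMagma.
Canonical mpoly.mpoly_dhomog__canonical__Algebra_SubBaseAddUMagma.
Canonical mpoly.mpoly_dhomog__canonical__Algebra_SubNmodule.
Canonical mpoly.mpoly_dhomog__canonical__Algebra_SubZmodule.
Canonical mpoly.mpoly_dhomog__canonical__Algebra_Zmodule.
Canonical mpoly.mpoly_dhomog__canonical__GRing_LSemiModule.
Canonical mpoly.mpoly_dhomog__canonical__GRing_Lmodule.
Canonical mpoly.mpoly_dhomog__canonical__GRing_SubLSemiModule.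
Canonical mpoly.mpoly_dhomog__canonical__GRing_SubLmodule.
Canonical mpoly.mpoly_dhomog__canonical__choice_Choice.
Canonical mpoly.mpoly_dhomog__canonical__choice_SubChoice.
Canonical mpoly.mpoly_dhomog__canonical__eqtype_Equality.
Canonical mpoly.mpoly_dhomog__canonical__eqtype_SubEquality.
Canonical mpoly.mpoly_dhomog__canonical__eqtype_SubType.
Canonical mpoly.mpoly_dhomog__canonical__vector_SemiVector.
Canonical mpoly.mpoly_dhomog__canonical__vector_Vector.
Canonical mpoly.mpoly_inject__canonical__Algebra_Additive.
Canonical mpoly.mpoly_inject__canonical__GRing_RMorphism.
Canonical mpoly.mpoly_inject_cast__canonical__Algebra_Additive.
Canonical mpoly.mpoly_inject_cast__canonical__GRing_RMorphism.
Canonical mpoly.mpoly_ipoly__canonical__Algebra_AddMagma.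
Canonical mpoly.mpoly_ipoly__canonical__Algebra_AddSemigroup.
Canonical mpoly.mpoly_ipoly__canonical__Algebra_AddUMagma.
Canonical mpoly.mpoly_ipoly__canonical__Algebra_BaseAddMagma.
Canonical mpoly.mpoly_ipoly__canonical__Algebra_BaseAddUMagma.
Canonical mpoly.mpoly_ipoly__canonical__Algebra_BaseZmodule.
Canonical mpoly.mpoly_ipoly__canonical__Algebra_ChoiceBaseAddMagma.
Canonical mpoly.mpoly_ipoly__canonical__Algebra_ChoiceBaseAddUMagma.
Canonical mpoly.mpoly_ipoly__canonical__Algebra_Nmodule.
Canonical mpoly.mpoly_ipoly__canonical__Algebra_Zmodule.
Canonical mpoly.mpoly_ipoly__canonical__GRing_LSemiModule.
Canonical mpoly.mpoly_ipoly__canonical__GRing_Lmodule.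
Canonical mpoly.mpoly_ipoly__canonical__GRing_NzRing.
Canonical mpoly.mpoly_ipoly__canonical__GRing_NzSemiRing.
Canonical mpoly.mpoly_ipoly__canonical__GRing_PzRing.
Canonical mpoly.mpoly_ipoly__canonical__GRing_PzSemiRing.
Canonical mpoly.mpoly_ipoly__canonical__choice_Choice.
Canonical mpoly.mpoly_ipoly__canonical__eqtype_Equality.
Canonical mpoly.mpoly_ishomog1_pred__canonical__Algebra_AddClosed.
Canonical mpoly.mpoly_ishomog1_pred__canonical__Algebra_OppClosed.
Canonical mpoly.mpoly_ishomog1_pred__canonical__Algebra_ZmodClosed.
Canonical mpoly.mpoly_ishomog1_pred__canonical__GRing_SubmodClosed.
Canonical mpoly.mpoly_map_mpoly__canonical__Algebra_Additive.
Canonical mpoly.mpoly_map_mpoly__canonical__GRing_RMorphism.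
Canonical mpoly.mpoly_mcoeff__canonical__Algebra_Additive.
Canonical mpoly.mpoly_mcoeff__canonical__GRing_LRMorphism.
Canonical mpoly.mpoly_mcoeff__canonical__GRing_Linear.
Canonical mpoly.mpoly_mcoeff__canonical__GRing_RMorphism.
Canonical mpoly.mpoly_mdeg__canonical__mpoly_Measure.
Canonical mpoly.mpoly_mderiv__canonical__Algebra_Additive.
Canonical mpoly.mpoly_mderiv__canonical__GRing_Linear.
Canonical mpoly.mpoly_mderivm__canonical__Algebra_Additive.
Canonical mpoly.mpoly_mderivm__canonical__GRing_Linear.
Canonical mpoly.mpoly_meval__canonical__Algebra_Additive.
Canonical mpoly.mpoly_meval__canonical__GRing_LRMorphism.
Canonical mpoly.mpoly_meval__canonical__GRing_Linear.
Canonical mpoly.mpoly_meval__canonical__GRing_RMorphism.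
Canonical mpoly.mpoly_mmap__canonical__Algebra_Additive.
Canonical mpoly.mpoly_mmap__canonical__GRing_RMorphism.
Canonical mpoly.mpoly_mnm_add__canonical__Monoid_ComLaw.
Canonical mpoly.mpoly_mnm_add__canonical__Monoid_Law.
Canonical mpoly.mpoly_mnm_add__canonical__SemiGroup_ComLaw.
Canonical mpoly.mpoly_mnm_add__canonical__SemiGroup_Law.
Canonical mpoly.mpoly_mnmwgt__canonical__mpoly_Measure.
Canonical mpoly.mpoly_mpolyC__canonical__Algebra_Additive.
Canonical mpoly.mpoly_mpolyC__canonical__GRing_RMorphism.
Canonical mpoly.mpoly_mpolyOver_pred__canonical__Algebra_AddClosed.
Canonical mpoly.mpoly_mpolyOver_pred__canonical__Algebra_OppClosed.
Canonical mpoly.mpoly_mpolyOver_pred__canonical__Algebra_ZmodClosed.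
Canonical mpoly.mpoly_mpolyOver_pred__canonical__GRing_Mul2Closed.
Canonical mpoly.mpoly_mpolyOver_pred__canonical__GRing_MulClosed.
Canonical mpoly.mpoly_mpolyOver_pred__canonical__GRing_Semiring2Closed.
Canonical mpoly.mpoly_mpolyOver_pred__canonical__GRing_SemiringClosed.
Canonical mpoly.mpoly_mpolyOver_pred__canonical__GRing_SmulClosed.
Canonical mpoly.mpoly_mpolyOver_pred__canonical__GRing_SubringClosed.
Canonical mpoly.mpoly_mpoly__canonical__Algebra_AddMagma.
Canonical mpoly.mpoly_mpoly__canonical__Algebra_AddSemigroup.
Canonical mpoly.mpoly_mpoly__canonical__Algebra_AddUMagma.
Canonical mpoly.mpoly_mpoly__canonical__Algebra_BaseAddMagma.
Canonical mpoly.mpoly_mpoly__canonical__Algebra_BaseAddUMagma.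
Canonical mpoly.mpoly_mpoly__canonical__Algebra_BaseZmodule.
Canonical mpoly.mpoly_mpoly__canonical__Algebra_ChoiceBaseAddMagma.
Canonical mpoly.mpoly_mpoly__canonical__Algebra_ChoiceBaseAddUMagma.
Canonical mpoly.mpoly_mpoly__canonical__Algebra_Nmodule.
Canonical mpoly.mpoly_mpoly__canonical__Algebra_Zmodule.
Canonical mpoly.mpoly_mpoly__canonical__GRing_Algebra.
Canonical mpoly.mpoly_mpoly__canonical__GRing_ComAlgebra.
Canonical mpoly.mpoly_mpoly__canonical__GRing_ComNzRing.
Canonical mpoly.mpoly_mpoly__canonical__GRing_ComNzSemiRing.
Canonical mpoly.mpoly_mpoly__canonical__GRing_ComPzRing.
Canonical mpoly.mpoly_mpoly__canonical__GRing_ComPzSemiRing.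
Canonical mpoly.mpoly_mpoly__canonical__GRing_ComSemiAlgebra.
Canonical mpoly.mpoly_mpoly__canonical__GRing_ComUnitAlgebra.
Canonical mpoly.mpoly_mpoly__canonical__GRing_ComUnitRing.
Canonical mpoly.mpoly_mpoly__canonical__GRing_IntegralDomain.
Canonical mpoly.mpoly_mpoly__canonical__GRing_LSemiAlgebra.
Canonical mpoly.mpoly_mpoly__canonical__GRing_LSemiModule.
Canonical mpoly.mpoly_mpoly__canonical__GRing_Lalgebra.
Canonical mpoly.mpoly_mpoly__canonical__GRing_Lmodule.
Canonical mpoly.mpoly_mpoly__canonical__GRing_NzRing.
Canonical mpoly.mpoly_mpoly__canonical__GRing_NzSemiRing.
Canonical mpoly.mpoly_mpoly__canonical__GRing_PzRing.
Canonical mpoly.mpoly_mpoly__canonical__GRing_PzSemiRing.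
Canonical mpoly.mpoly_mpoly__canonical__GRing_SemiAlgebra.
Canonical mpoly.mpoly_mpoly__canonical__GRing_UnitAlgebra.
Canonical mpoly.mpoly_mpoly__canonical__GRing_UnitRing.
Canonical mpoly.mpoly_mpoly__canonical__choice_Choice.
Canonical mpoly.mpoly_mpoly__canonical__choice_SubChoice.
Canonical mpoly.mpoly_mpoly__canonical__eqtype_Equality.
Canonical mpoly.mpoly_mpoly__canonical__eqtype_SubEquality.
Canonical mpoly.mpoly_mpoly__canonical__eqtype_SubType.
Canonical mpoly.mpoly_mpoly_of_dhomog__canonical__Algebra_Additive.
Canonical mpoly.mpoly_mpoly_of_dhomog__canonical__GRing_Linear.
Canonical mpoly.mpoly_mpwiden__canonical__Algebra_Additive.
Canonical mpoly.mpoly_mpwiden__canonical__GRing_RMorphism.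
Canonical mpoly.mpoly_msym__canonical__Algebra_Additive.
Canonical mpoly.mpoly_msym__canonical__GRing_LRMorphism.
Canonical mpoly.mpoly_msym__canonical__GRing_Linear.
Canonical mpoly.mpoly_msym__canonical__GRing_RMorphism.
Canonical mpoly.mpoly_multinom__canonical__Order_BDistrLattice.
Canonical mpoly.mpoly_multinom__canonical__Order_BJoinSemilattice.
Canonical mpoly.mpoly_multinom__canonical__Order_BLattice.
Canonical mpoly.mpoly_multinom__canonical__Order_BMeetSemilattice.
Canonical mpoly.mpoly_multinom__canonical__Order_BPOrder.
Canonical mpoly.mpoly_multinom__canonical__Order_BPreorder.
Canonical mpoly.mpoly_multinom__canonical__Order_BTotal.
Canonical mpoly.mpoly_multinom__canonical__Order_DistrLattice.
Canonical mpoly.mpoly_multinom__canonical__Order_JoinSemilattice.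
Canonical mpoly.mpoly_multinom__canonical__Order_Lattice.
Canonical mpoly.mpoly_multinom__canonical__Order_MeetSemilattice.
Canonical mpoly.mpoly_multinom__canonical__Order_POrder.
Canonical mpoly.mpoly_multinom__canonical__Order_Preorder.
Canonical mpoly.mpoly_multinom__canonical__Order_Total.
Canonical mpoly.mpoly_multinom__canonical__choice_Choice.
Canonical mpoly.mpoly_multinom__canonical__choice_Countable.
Canonical mpoly.mpoly_multinom__canonical__choice_SubChoice.
Canonical mpoly.mpoly_multinom__canonical__choice_SubCountable.
Canonical mpoly.mpoly_multinom__canonical__eqtype_Equality.
Canonical mpoly.mpoly_multinom__canonical__eqtype_SubEquality.
Canonical mpoly.mpoly_multinom__canonical__eqtype_SubType.
Canonical mpoly.mpoly_muni__canonical__Algebra_Additive.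
Canonical mpoly.mpoly_muni__canonical__GRing_RMorphism.
Canonical mpoly.mpoly_mwiden__canonical__Algebra_Additive.
Canonical mpoly.mpoly_mwiden__canonical__GRing_RMorphism.
Canonical mpoly.mpoly_pihomog__canonical__Algebra_Additive.
Canonical mpoly.mpoly_pihomog__canonical__GRing_Linear.
Canonical mpoly.mpoly_symmetric_pred__canonical__Algebra_AddClosed.
Canonical mpoly.mpoly_symmetric_pred__canonical__Algebra_OppClosed.
Canonical mpoly.mpoly_symmetric_pred__canonical__Algebra_ZmodClosed.
Canonical mpoly.mpoly_symmetric_pred__canonical__GRing_DivClosed.
Canonical mpoly.mpoly_symmetric_pred__canonical__GRing_DivalgClosed.
Canonical mpoly.mpoly_symmetric_pred__canonical__GRing_DivringClosed.
Canonical mpoly.mpoly_symmetric_pred__canonical__GRing_Mul2Closed.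
Canonical mpoly.mpoly_symmetric_pred__canonical__GRing_MulClosed.
Canonical mpoly.mpoly_symmetric_pred__canonical__GRing_SdivClosed.
Canonical mpoly.mpoly_symmetric_pred__canonical__GRing_Semiring2Closed.
Canonical mpoly.mpoly_symmetric_pred__canonical__GRing_SemiringClosed.
Canonical mpoly.mpoly_symmetric_pred__canonical__GRing_SmulClosed.
Canonical mpoly.mpoly_symmetric_pred__canonical__GRing_SubalgClosed.
Canonical mpoly.mpoly_symmetric_pred__canonical__GRing_SubmodClosed.
Canonical mpoly.mpoly_symmetric_pred__canonical__GRing_SubringClosed.

Set Implicit Arguments. Unset Strict Implicit. Unset Printing Implicit Defensive.
Import Order.TTheory GRing.Theory Num.Theory.
Import numFieldNormedType.Exports.
Local Open Scope classical_set_scope.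
Local Open Scope ring_scope.

(* R^n is 'rV[R]_n with its (product / sup-norm) topology. *)
Notation Rn R n := 'rV[R]_n.

Definition BorelRn (R : realType) (n : nat) :=
  g_sigma_algebraType (@open (Rn R n)).

Definition coords (R : realType) (n : nat) (x : Rn R n) : 'I_n -> R :=
  fun i => x ord0 i.

Definition monom (R : realType) (n : nat) (alpha : mpoly.multinom n)
    (x : Rn R n) : R :=
  \prod_(i < n) (x ord0 i) ^+ (mpoly.fun_of_multinom alpha i).

Definition mfact (n : nat) (alpha : mpoly.multinom n) : nat :=
  (\prod_(i < n) (mpoly.fun_of_multinom alpha i)`!)%N.

(* D(s) p = sum_alpha s_alpha / alpha! * d^alpha p.  For a given p only the
   alpha with |alpha| < msize p (i.e. |alpha| <= deg p) can give a non-zero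
   derivative, so the (formally infinite) sum is the finite sum below. *)
Definition Dop (R : realType) (n : nat) (s : mpoly.multinom n -> R)
    (p : mpoly.mpoly n R) : mpoly.mpoly n R :=
  \sum_(a : mpoly.bmultinom n ((\max_(m <- mpoly.msupp p) (mpoly.mdeg m).+1)%N))
     (s (mpoly.bmnm a) / (mfact (mpoly.bmnm a))%:R) *: mpoly.mderivm (mpoly.bmnm a) p.

Definition pos_preserver (R : realType) (n : nat) (K : set (Rn R n))
    (T : mpoly.mpoly n R -> mpoly.mpoly n R) : Prop :=
  forall p : mpoly.mpoly n R,
    (forall x, K x -> 0 <= mpoly.meval (coords x) p) ->
    forall x, K x -> 0 <= mpoly.meval (coords x) (T p).

Definition Ksharp (R : realType) (n : nat) (K : set (Rn R n)) : set (Rn R n) :=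
  [set x | forall y, K y -> K (x + y)].

Definition msupport (R : realType) (n : nat)
    (mu : {measure set (BorelRn R n) -> \bar R}) : set (Rn R n) :=
  [set x | forall U : set (Rn R n), open U -> U x -> (0 < mu U)%E].

Definition moment_seq (R : realType) (n : nat) (L : set (Rn R n))
    (s : mpoly.multinom n -> R) : Prop :=
  exists mu : {measure set (BorelRn R n) -> \bar R},
    msupport mu `<=` L /\
    forall alpha : mpoly.multinom n,
      mu.-integrable setT (fun x : BorelRn R n => (monom alpha x)%:E) /\
      (s alpha)%:E = (\int[mu]_(x in setT) (monom alpha x)%:E)%E.

(* Main.v *)
Require Import Defs.
From HB Require Import structures.
From mathcomp Require Import all_boot all_order all_algebra.
From mathcomp Require Import all_classical all_reals all_analysis.
From mathcomp Require mpoly.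
Import Order.TTheory GRing.Theory Num.Theory.
Import numFieldNormedType.Exports.
Local Open Scope classical_set_scope.
Local Open Scope ring_scope.

From mathcomp Require Import ring lra.

Lemma bmnm_insubd (n d : nat) (a0 : mpoly.bmultinom n d) (x : mpoly.multinom n) :
  (mpoly.mdeg x < d)%N -> mpoly.bmnm (insubd a0 x) = x.
Proof. by move=> hx; apply: (insubdK a0); rewrite unfold_in. Qed.

Lemma prod_sum_bmnm (R : realType) (n d : nat) (m : mpoly.multinom n)
  (G : 'I_n -> nat -> R) :
  (mpoly.mdeg m < d)%N ->
  (forall i k, (mpoly.fun_of_multinom m i < k)%N -> G i k = 0) ->
  \prod_(i < n) \sum_(k < d) G i k =
  \sum_(a : mpoly.bmultinom n d)
     \prod_(i < n) G i (mpoly.fun_of_multinom (mpoly.bmnm a) i).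
Proof.
move=> hm hG.
have mle : forall (a : mpoly.multinom n) i,
    (mpoly.fun_of_multinom a i <= mpoly.mdeg a)%N.
  move=> a i; rewrite mpoly.mdegE (bigD1 i) //=; exact: leq_addr.
case: d hm => [//|d] hm.
rewrite bigA_distr_bigA /=.
pose P := fun f : {ffun 'I_n -> 'I_d.+1} =>
  [forall i, (f i <= mpoly.fun_of_multinom m i)%N].
rewrite (bigID P) /= [X in _ + X]big1 ?addr0; last first.
  move=> f /forallPn [i]; rewrite -ltnNge => lt.
  by rewrite (bigD1 i) //= hG // mul0r.
pose a0 := @mpoly.BMultinom n d.+1 m hm.
pose h := fun a : mpoly.bmultinom n d.+1 =>
  [ffun i => (inord (mpoly.fun_of_multinom (mpoly.bmnm a) i) : 'I_d.+1)].
pose h' := fun f : {ffun 'I_n -> 'I_d.+1} =>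
  insubd a0 (mpoly.Multinom [tuple (f i : nat) | i < n]).
have hdeg : forall f, P f ->
    (mpoly.mdeg (mpoly.Multinom [tuple (f i : nat) | i < n]) < d.+1)%N.
  move=> f /forallP Pf; apply: (leq_ltn_trans _ hm).
  rewrite !mpoly.mdegE; apply: leq_sum => i _; rewrite mpoly.mnmE; exact: Pf.
rewrite (reindex_onto h h'); last first.
  move=> f Pf; apply/ffunP => i; rewrite ffunE /h' bmnm_insubd ?mpoly.mnmE.
    by rewrite inord_val.
  by apply: hdeg.
have hai : forall (a : mpoly.bmultinom n d.+1) i,
    (mpoly.fun_of_multinom (mpoly.bmnm a) i < d.+1)%N.
  by case=> a ha i /=; apply: leq_ltn_trans ha; apply: mle.
rewrite big_mkcond /=; apply: eq_bigr => a _.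
have eqF : \prod_(i < n) G i (h a i) =
    \prod_(i < n) G i (mpoly.fun_of_multinom (mpoly.bmnm a) i).
  by apply: eq_bigr => i _; rewrite ffunE inordK.
case: ifP => [_|]; first exact: eqF.
move/negbT; rewrite negb_and => /orP[/forallPn [i]|].
  rewrite -ltnNge ffunE inordK // => lt.
  by rewrite (bigD1 i) //= hG // mul0r.
move/negP; case; apply/eqP/val_inj => /=.
rewrite /h' bmnm_insubd.
  by apply/mpoly.mnmP => i; rewrite mpoly.mnmE ffunE inordK.
apply: leq_ltn_trans (valP a).
by rewrite !mpoly.mdegE; apply: leq_sum => i _; rewrite mpoly.mnmE ffunE inordK.
Qed.
Lemma taylorX (R : realType) (n d : nat) (m : mpoly.multinom n) (x y : 'I_n -> R) :
  (mpoly.mdeg m < d)%N ->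
  \prod_(i < n) (x i + y i) ^+ mpoly.fun_of_multinom m i =
  \sum_(a : mpoly.bmultinom n d)
    ((\prod_(i < n) y i ^+ mpoly.fun_of_multinom (mpoly.bmnm a) i)
        / (mfact (mpoly.bmnm a))%:R *
     mpoly.meval x (mpoly.mderivm (mpoly.bmnm a) (mpoly.mpolyX R m))).
Proof.
move=> hm.
pose G := fun (i : 'I_n) (k : nat) =>
  ('C(mpoly.fun_of_multinom m i, k))%:R *
  (x i ^+ (mpoly.fun_of_multinom m i - k) * y i ^+ k) : R.
have mle : forall i, (mpoly.fun_of_multinom m i < d)%N.
  move=> i; apply: leq_ltn_trans hm.
  rewrite mpoly.mdegE (bigD1 i) //=; exact: leq_addr.
transitivity (\prod_(i < n) \sum_(k < d) G i k).
  apply: eq_bigr => i _; rewrite exprDn (big_ord_widen _ (fun k : nat => x i ^+ (mpoly.fun_of_multinom m i - k) * y i ^+ k *+ 'C(mpoly.fun_of_multinom m i, k)) (mle i)).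
  rewrite big_mkcond /=; apply: eq_bigr => k _; rewrite /G.
  case: ifP => [_|/negbT]; first by rewrite mulr_natl.
  by rewrite ltnS -ltnNge => /bin_small ->; rewrite mul0r.
rewrite (@prod_sum_bmnm R n d m G hm); last first.
  by move=> i k /bin_small hk; rewrite /G hk mul0r.
apply: eq_bigr => a _.
rewrite mpoly.mderivmX mpoly.mevalZ mpoly.mevalX /mfact natr_prod -prodfV natr_prod.
rewrite -!big_split /=; apply: eq_bigr => i _.
rewrite mpoly.mnmBE /G.
set k := mpoly.fun_of_multinom (mpoly.bmnm a) i.
set mi := mpoly.fun_of_multinom m i.
rewrite -bin_ffact natrM.
have hk : (k`!)%:R != 0 :> R by rewrite pnatr_eq0 -lt0n fact_gt0.
by field.
Qed.
Lemma taylor (R : realType) (n d : nat) (p : mpoly.mpoly n R) (x y : 'I_n -> R) :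
  (forall m, m \in mpoly.msupp p -> (mpoly.mdeg m < d)%N) ->
  mpoly.meval (fun i => x i + y i) p =
  \sum_(a : mpoly.bmultinom n d)
    ((\prod_(i < n) y i ^+ mpoly.fun_of_multinom (mpoly.bmnm a) i)
        / (mfact (mpoly.bmnm a))%:R *
     mpoly.meval x (mpoly.mderivm (mpoly.bmnm a) p)).
Proof.
move=> hp.
rewrite [in LHS](mpoly.mpolyE p) raddf_sum /=.
under [RHS]eq_bigr => a _ do
  rewrite [in mpoly.mderivm _ p](mpoly.mpolyE p) !raddf_sum /= mulr_sumr.
rewrite exchange_big /= big_seq [RHS]big_seq; apply: eq_bigr => m hm.
rewrite mpoly.mevalZ mpoly.mevalX (@taylorX R n d m x y).
  rewrite mulr_sumr; apply: eq_bigr => a _.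
  by rewrite mpoly.mderivmZ mpoly.mevalZ mulrCA.
exact: hp.
Qed.
Lemma support_null (R : realType) (n : nat)
    (mu : {measure set (BorelRn R n) -> \bar R}) :
  exists N : set (BorelRn R n),
    [/\ measurable N, mu N = 0%E & forall y, ~ N y -> msupport mu y].
Proof.
have mopen : forall U : set 'rV[R]_n, open U -> measurable (U : set (BorelRn R n)).
  by move=> U oU; exact: sub_sigma_algebra.
pose N := [set y : 'rV[R]_n | exists U : set 'rV[R]_n, [/\ open U, U y & mu U = 0%E]].
have oN : open N.
  rewrite openE => y [U [oU Uy muU]].
  have : nbhs y U by apply: open_nbhs_nbhs; split.
  by apply: filterS => z Uz; exists U.
exists N; split.
- exact: mopen.
- pose ballq := fun qr : 'rV[rat]_n * rat =>
    ball (map_mx (@ratr R) qr.1) (ratr qr.2) : set 'rV[R]_n.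
  pose B := fun k : nat =>
    if unpickle k is Some qr then
      (if `[< mu (ballq qr) = 0%E >] then ballq qr else set0)
    else set0.
  have mB : forall k, measurable (B k : set (BorelRn R n)).
    move=> k; rewrite /B; case: (unpickle k) => [qr|]; last exact: measurable0.
    by case: ifP => _; [apply: mopen; exact: ball_open|exact: measurable0].
  have B0 : forall k, mu (B k) = 0%E.
    move=> k; rewrite /B; case: (unpickle k) => [qr|]; last exact: measure0.
    by case: ifPn => [/asboolP //|_]; exact: measure0.
  have NB : N `<=` \bigcup_k B k.
    move=> y [U [oU Uy muU]].
    have : nbhs y U by apply: open_nbhs_nbhs; split.
    move/nbhs_ballP => [e /= e0 sub].
    have hr : exists r : rat, (0 < ratr r :> R) && (ratr r < e / 2).
      have e20 : 0 < e / 2 by rewrite divr_gt0.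
      have [r hr] := rat_in_itvoo e20.
      by exists r; rewrite in_itv /= in hr.
    case: hr => r /andP[r0 r1].
    have hq : forall j : 'I_n, exists q : rat,
        ratr q \in `](y ord0 j - ratr r), (y ord0 j + ratr r)[.
      by move=> j; apply: rat_in_itvoo; lra.
    have [f hf] := choice hq.
    pose q : 'rV[rat]_n := \row_j f j.
    pose qR := map_mx (@ratr R) q.
    have yq : `|y - qR| < ratr r.
      have : ball y (ratr r) qR.
        split => // i j; rewrite ord1 -ball_normE /= !mxE.
        move: (hf j); rewrite in_itv /= => /andP[h1 h2].
        rewrite ltr_norml; apply/andP; split; lra.
      by rewrite -ball_normE.
    have bsub : ballq (q, r) `<=` U.
      move=> z; rewrite /ballq /= -/qR -ball_normE /= => hz; apply: sub.
      rewrite -ball_normE /=.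
      apply: (le_lt_trans (ler_distD qR y z)).
      have : `|y - qR| + `|qR - z| < ratr r + ratr r by apply: ltrD.
      move=> h; apply: (lt_le_trans h); lra.
    have mu0 : mu (ballq (q, r)) = 0%E.
      apply/eqP; rewrite eq_le measure_ge0 andbT -muU; apply: le_measure => //.
      - by rewrite inE; apply: mopen; exact: ball_open.
      - by rewrite inE; apply: mopen.
    exists (pickle (q, r)) => //; rewrite /B pickleK asboolT //.
    by rewrite /ballq /= -/qR -ball_normE /= distrC.
  apply/eqP; rewrite eq_le measure_ge0 andbT.
  have := @measure_sigma_subadditive _ _ _ mu N B mB (mopen _ oN) NB.
  move=> H; apply: (le_trans H).
  by rewrite eseries0.
- move=> y Ny U oU Uy; rewrite lt0e measure_ge0 andbT.
  by apply/eqP => muU; apply: Ny; exists U.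
Qed.
Theorem lemma4p10 (R : realType) (n : nat) (K : set 'rV[R]_n)
    (s : mpoly.multinom n -> R) :
  K !=set0 -> closed K ->
  moment_seq (Ksharp K) s ->
  pos_preserver K (Dop s).
Proof.
move=> _ _ [mu [hsupp hmom]] p hp x Kx.
set d := (\max_(m <- mpoly.msupp p) (mpoly.mdeg m).+1)%N.
have hd : forall m, m \in mpoly.msupp p -> (mpoly.mdeg m < d)%N.
  by move=> m hm; apply: (@leq_bigmax_seq _ _ xpredT (fun m => (mpoly.mdeg m).+1)).
pose c := fun a : mpoly.bmultinom n d =>
  mpoly.meval (coords x) (mpoly.mderivm (mpoly.bmnm a) p) / (mfact (mpoly.bmnm a))%:R.
have e1 : mpoly.meval (coords x) (Dop s p) =
    \sum_(a : mpoly.bmultinom n d) s (mpoly.bmnm a) * c a.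
  rewrite /Dop -/d raddf_sum; apply: eq_bigr => a _.
  by rewrite -[LHS]/(mpoly.meval _ _) mpoly.mevalZ /c mulrAC -mulrA.
suff h : (0%:E <= (mpoly.meval (coords x) (Dop s p))%:E)%E by rewrite lee_fin in h.
rewrite e1 -sumEFin.
have key : forall a : mpoly.bmultinom n d, ((s (mpoly.bmnm a)) * c a)%:E =
    (\int[mu]_(y in setT) ((c a)%:E * (monom (mpoly.bmnm a) y)%:E))%E.
  move=> a; have [hi hs] := hmom (mpoly.bmnm a).
  by rewrite integralZl // -hs -EFinM mulrC.
under eq_bigr do rewrite key.
rewrite -(@integral_sum _ _ _ mu setT measurableT _
   (fun a y => (c a)%:E * (monom (mpoly.bmnm a) y)%:E)%E); last first.
  by move=> a; apply: integrableZl => //; exact: (hmom _).1.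
have [N [mN muN hN]] := @support_null R n mu.
have HI : mu.-integrable setT (fun y : BorelRn R n =>
    (\sum_(a : mpoly.bmultinom n d) (c a)%:E * (monom (mpoly.bmnm a) y)%:E)%E).
  by apply: (integrable_sum measurableT) => a _; apply: integrableZl => //; exact: (hmom _).1.
rewrite (negligible_integral mN measurableT HI muN).
apply: integral_ge0 => y [_ Ny].
rewrite sumEFin lee_fin.
have Ksy : K (y + x) := hsupp y (hN y Ny) x Kx.
have := hp _ Ksy.
have -> : mpoly.meval (coords (y + x)) p =
    mpoly.meval (fun i => coords x i + coords y i) p.
  by apply: mpoly.meval_eq => i; rewrite /coords mxE addrC.
rewrite (@taylor R n d p (coords x) (coords y) hd).
congr (_ <= _); apply: eq_bigr => a _.
rewrite /c /monom /coords.
by rewrite mulrC mulrAC mulrA.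
Qed.
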